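(* Let $A$ and $Y$ be Hopf algebras and $\rho:Y\to A\otimes Y$ a linear map. Then $\rho$ makes $Y$ a partial $A$-comodule coalgebra in the Hopf-algebraic sense if and only if it makes $Y$ a partial $A$-comodule coalgebra in the multiplier-Hopf-algebraic sense (both defined below).
   Context: Hopf-algebraic sense: (i) $(\varepsilon_A\otimes\imath_Y)\rho=\imath_Y$; (ii) $(\imath_A\otimes\Delta_Y)\rho=(m_A\otimes\imath_Y\otimes\imath_Y)(\imath_A\otimes\tau_{Y,A}\otimes\imath_Y)(\rho\otimes\rho)\Delta_Y$; (iii) $(\imath_A\otimes\rho)\rho=(m_A\otimes\imath_A\otimes\imath_Y)\{(\imath_A\otimes\varepsilon_Y)\rho\otimes[(\Delta_A\otimes\imath_Y)\rho]\}\Delta_Y$, where $m_A$ is multiplication and $\tau_{Y,A}(y\otimes a)=a\otimes y$. Multiplier-Hopf-algebraic sense (with $M(A\otimes Y)=A\otimes Y$ here): put $T:Y\otimes A\to A\otimes Y$, $T(y\otimes a)=\rho(y)(a\otimes1)$. Then: (i) $(\varepsilon_A\otimes\imath_Y)\rho(y)=y$; (ii) $((\imath_Y\otimes T)(\Delta_Y(y)\otimes a))(1\otimes1\otimes y')$ and $(1\otimes1\otimes y')((\imath_Y\otimes T)(\Delta_Y(y)\otimes a))$ lie in $Y\otimes A\otimes Y$; (iii) $(\imath_A\otimes\Delta_Y)T=(T\otimes\imath_Y)(\imath_Y\otimes T)(\Delta_Y\otimes\imath_A)$; (iv) $(\imath_A\otimes T)(T\otimes\imath_A)(\imath_Y\otimes\Delta_A)=((\imath_A\otimes\varepsilon_Y)T\otimes\imath_A\otimes\imath_Y)(\imath_Y\otimes(\Delta_A\otimes\imath_Y)T)(\Delta_Y\otimes\imath_A)$,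 for all $y,y'\in Y$, $a\in A$. *)

(* Defs.v *)
(* Vector spaces over a field K are modelled as free
   K-vector spaces {malg K[X]} (finitely supported functions X -> K) on a
   basis X; tensor products are free spaces on products of bases. *)
From HB Require Import structures.
From mathcomp Require Import all_boot all_order all_algebra.
From mathcomp Require Import finmap.
From mathcomp.multinomials Require Import monalg.
Set Implicit Arguments. Unset Strict Implicit. Unset Printing Implicit Defensive.
Import GRing.Theory.
Local Open Scope ring_scope.

Section FreeTensor.
Variable K : fieldType.

Definition vec (X : choiceType) := {malg K[X]}.
Arguments vec X%_type.

Definition bas (X : choiceType) (x : X) : vec X := << x >>.

Definition linext (X Z : choiceType) (f : X -> vec Z) (v : vec X) : vec Z :=
  \sum_(x <- msupp v) v@_x *: f x.

Definition tens (X Y : choiceType) (u : vec X) (v : vec Y) : vec (X * Y) :=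
  \sum_(x <- msupp u) \sum_(y <- msupp v) (u@_x * v@_y) *: bas (x, y).

Definition push (X Z : choiceType) (g : X -> Z) : vec X -> vec Z :=
  linext (fun x => bas (g x)).

Definition tmap (X1 Y1 X2 Y2 : choiceType) (f : vec X1 -> vec X2)
  (g : vec Y1 -> vec Y2) : vec (X1 * Y1) -> vec (X2 * Y2) :=
  linext (fun p => tens (f (bas p.1)) (g (bas p.2))).

(* a linear functional seen as a map into K = V_unit *)
Definition funv (X : choiceType) (e : vec X -> K) (v : vec X) : vec unit :=
  e v *: bas tt.

Definition lunit (X : choiceType) : vec (unit * X) -> vec X := push snd.
Definition runit (X : choiceType) : vec (X * unit) -> vec X := push fst.

Definition asr (X Y Z : choiceType) (p : (X * Y) * Z) : X * (Y * Z) :=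
  (p.1.1, (p.1.2, p.2)).
Definition asl (X Y Z : choiceType) (p : X * (Y * Z)) : (X * Y) * Z :=
  ((p.1, p.2.1), p.2.2).
Definition mid4 (X Y Z W : choiceType) (p : (X * Y) * (Z * W)) :
  (X * Z) * (Y * W) := ((p.1.1, p.2.1), (p.1.2, p.2.2)).

Definition idv (X : choiceType) (v : vec X) : vec X := v.
Arguments idv X%_type v.

Definition linmap (X Z : choiceType) (f : vec X -> vec Z) :=
  forall (a : K) (u v : vec X), f (a *: u + v) = a *: f u + f v.
Definition linfun (X : choiceType) (e : vec X -> K) :=
  forall (a : K) (u v : vec X), e (a *: u + v) = a * e u + e v.

Definition tmul (X Y : choiceType) (mX : vec (X * X) -> vec X)
  (mY : vec (Y * Y) -> vec Y) : vec ((X * Y) * (X * Y)) -> vec (X * Y) :=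
  fun w => tmap mX mY (push (@mid4 X Y X Y) w).

Record hopf_data (X : choiceType) := HopfData {
  hmul : vec (X * X) -> vec X;
  hone : vec X;
  hcomul : vec X -> vec (X * X);
  hcounit : vec X -> K;
  hanti : vec X -> vec X }.

Definition is_hopf (X : choiceType) (H : hopf_data X) : Prop :=
  let m := hmul H in let one := hone H in let D := hcomul H in
  let e := hcounit H in let S := hanti H in
  [/\ linmap m, linmap D, linfun e & linmap S] /\
  [/\
      (forall w : vec ((X * X) * X),
         m (tmap m (@idv X) w) = m (tmap (@idv X) m (push (@asr X X X) w))),
      (forall v, m (tens one v) = v /\ m (tens v one) = v),
      (forall v, push (@asr X X X) (tmap D (@idv X) (D v))
                 = tmap (@idv X) D (D v)),
      (forall v, lunit (tmap (funv e) (@idv X) (D v)) = v /\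
                 runit (tmap (@idv X) (funv e) (D v)) = v) &
      [/\ (forall w, D (m w) = tmul m m (tmap D D w)),
          D one = tens one one,
          (forall u v, e (m (tens u v)) = e u * e v),
          e one = 1 &
      (forall v, m (tmap S (@idv X) (D v)) = e v *: one /\
                 m (tmap (@idv X) S (D v)) = e v *: one)]].

Section Comodule.
Variables (I J : choiceType) (A : hopf_data I) (Y : hopf_data J).
Variable rho : vec J -> vec (I * J).

Local Notation mA := (hmul A). Local Notation DA := (hcomul A).
Local Notation eA := (hcounit A). Local Notation mY := (hmul Y).
Local Notation DY := (hcomul Y). Local Notation eY := (hcounit Y).

Definition partial_comod_coalg_hopf : Prop :=
  [/\
      (forall y, lunit (tmap (funv eA) (@idv J) (rho y)) = y),
      (forall y, tmap (@idv I) DY (rho y)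
         = tmap mA (@idv (J * J))
             (push (@mid4 I J I J) (tmap rho rho (DY y)))) &
      (forall y, tmap (@idv I) rho (rho y)
         = tmap mA (@idv (I * J))
             (push (fun p : I * ((I * I) * J) =>
                      ((p.1, p.2.1.1), (p.2.1.2, p.2.2)))
               (tmap (fun z => runit (tmap (@idv I) (funv eY) (rho z)))
                     (fun z => tmap DA (@idv J) (rho z)) (DY y))))].

Definition Tmap : vec (J * I) -> vec (I * J) :=
  linext (fun p => tmul mA mY (tens (rho (bas p.1)) (tens (bas p.2) (hone Y)))).

Definition Teps : vec (J * I) -> vec I :=
  fun w => runit (tmap (@idv I) (funv eY) (Tmap w)).

(* partial A-comodule coalgebra, multiplier-Hopf-algebraic sense
   (with M(A (x) Y) = A (x) Y) *)
Definition partial_comod_coalg_mult : Prop :=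
  [/\
      (forall y, lunit (tmap (funv eA) (@idv J) (rho y)) = y),
      (forall (y y' : vec J) (a : vec I),
         let z := tmap (@idv J) Tmap (push (@asr J J I) (tens (DY y) a)) in
         let u := tens (hone Y) (tens (hone A) y') in
         (exists w : vec (J * (I * J)),
             w = tmul mY (tmul mA mY) (tens z u)) /\
         (exists w : vec (J * (I * J)),
             w = tmul mY (tmul mA mY) (tens u z))),
      (forall w : vec (J * I),
         tmap (@idv I) DY (Tmap w)
         = push (@asr I J J)
             (tmap Tmap (@idv J)
               (push (@asl J I J)
                 (tmap (@idv J) Tmap
                   (push (@asr J J I) (tmap DY (@idv I) w)))))) &
      (forall w : vec (J * I),
         tmap (@idv I) Tmap
           (push (@asr I J I)
             (tmap Tmap (@idv I)
               (push (@asl J I I) (tmap (@idv J) DA w))))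
         = tmap Teps (@idv (I * J))
             (push (fun p : J * ((I * I) * J) =>
                      ((p.1, p.2.1.1), (p.2.1.2, p.2.2)))
               (tmap (@idv J) (fun v => tmap DA (@idv J) (Tmap v))
                 (push (@asr J J I) (tmap DY (@idv I) w)))))].

End Comodule.
End FreeTensor.
Arguments vec K X%_type.
Arguments idv K X%_type v.

(* Main.v *)
Require Import Defs.
From mathcomp Require Import all_boot all_order all_algebra.
From mathcomp Require Import finmap.
From mathcomp.multinomials Require Import monalg.
Set Implicit Arguments. Unset Strict Implicit. Unset Printing Implicit Defensive.
Import GRing.Theory.
Local Open Scope ring_scope.

Section Infra.
Variable K : fieldType.

Lemma linextEw (X Z : choiceType) (f : X -> vec K Z) (v : vec K X) (d : {fset X}) :
  (msupp v `<=` d)%fset -> linext f v = \sum_(x <- d) v@_x *: f x.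
Proof.
move=> le; rewrite /linext (big_fset_incl _ le) //= => x _ /mcoeff_outdom ->.
by rewrite scale0r.
Qed.

Lemma lin_linext (X Z : choiceType) (f : X -> vec K Z) : linmap (linext f).
Proof.
move=> a u v.
pose d := (msupp u `|` msupp v)%fset.
have hu : (msupp u `<=` d)%fset by rewrite fsubsetUl.
have hv : (msupp v `<=` d)%fset by rewrite fsubsetUr.
have huv : (msupp (a *: u + v) `<=` d)%fset.
  apply: fsubset_trans (msuppD_le _ _) _; apply: fsetUSS => //.
  exact: msuppZ_le.
rewrite (linextEw _ huv) (linextEw _ hu) (linextEw _ hv) scaler_sumr -big_split /=.
by apply: eq_bigr => x _; rewrite mcoeffD mcoeffZ scalerDl scalerA.
Qed.

Lemma linext_bas (X Z : choiceType) (f : X -> vec K Z) x : linext f (bas K x) = f x.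
Proof.
by rewrite (linextEw _ msuppU_le) big_seq_fset1 /bas mcoeffUU scale1r.
Qed.

Lemma monU_scale (X : choiceType) (c : K) (x : X) :
  << c *g x >> = c *: (bas K x).
Proof. by apply/malgP => k; rewrite mcoeffZ !mcoeffU mulr_natr. Qed.

Lemma vec_decomp (X : choiceType) (v : vec K X) :
  v = \sum_(x <- msupp v) v@_x *: bas K x.
Proof.
by rewrite {1}(monalgE v); apply: eq_bigr => x _; rewrite monU_scale.
Qed.

Lemma lin0 (X Z : choiceType) (h : vec K X -> vec K Z) : linmap h -> h 0 = 0.
Proof.
move=> H; have := H 1 0 0; rewrite !scale1r addr0.
move=> /(congr1 (fun x => x - h 0)); rewrite addrK subrr => E.
by rewrite -E.
Qed.

Lemma linD (X Z : choiceType) (h : vec K X -> vec K Z) : linmap h ->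
  forall u v : vec K X, h (u + v) = h u + h v.
Proof. by move=> H u v; have := H 1 u v; rewrite !scale1r. Qed.

Lemma linZ (X Z : choiceType) (h : vec K X -> vec K Z) : linmap h ->
  forall a (u : vec K X), h (a *: u) = a *: h u.
Proof. by move=> H a u; have := H a u 0; rewrite !addr0 (lin0 H) addr0. Qed.

Lemma lin_linextE (X Z : choiceType) (h : vec K X -> vec K Z) : linmap h ->
  forall v, h v = linext (fun x => h (bas K x)) v.
Proof.
move=> H v; rewrite {1}(vec_decomp v) /linext.
elim: (enum_fset (msupp v)) => [|x s IH]; first by rewrite !big_nil lin0.
by rewrite !big_cons linD // linZ // IH.
Qed.

Lemma lin_eq (X Z : choiceType) (h1 h2 : vec K X -> vec K Z) :
  linmap h1 -> linmap h2 -> (forall x, h1 (bas K x) = h2 (bas K x)) ->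
  forall v, h1 v = h2 v.
Proof.
move=> H1 H2 E v; rewrite (lin_linextE H1) (lin_linextE H2).
by rewrite /linext; apply: eq_bigr => x _; rewrite E.
Qed.


Lemma lin_comp (X Y Z : choiceType) (f : vec K Y -> vec K Z) (g : vec K X -> vec K Y) :
  linmap f -> linmap g -> linmap (fun x => f (g x)).
Proof. by move=> Hf Hg a u v; rewrite Hg Hf. Qed.

Lemma lin_id (X : choiceType) : linmap (fun x : vec K X => x).
Proof. by []. Qed.

Lemma lin_idv (X : choiceType) : linmap (@idv K X).
Proof. by []. Qed.

Lemma lin_tmap (X1 Y1 X2 Y2 : choiceType) (f : vec K X1 -> vec K X2)
  (g : vec K Y1 -> vec K Y2) : linmap (tmap f g).
Proof. exact: lin_linext. Qed.

Lemma lin_push (X Z : choiceType) (g : X -> Z) : linmap (@push K X Z g).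
Proof. exact: lin_linext. Qed.

Lemma tensE (X Y : choiceType) (u : vec K X) (v : vec K Y) :
  tens u v = linext (fun x => linext (fun y => bas K (x, y)) v) u.
Proof.
rewrite /tens /linext; apply: eq_bigr => x _; rewrite scaler_sumr.
by apply: eq_bigr => y _; rewrite scalerA.
Qed.

Lemma tensE' (X Y : choiceType) (u : vec K X) (v : vec K Y) :
  tens u v = linext (fun y => linext (fun x => bas K (x, y)) u) v.
Proof.
rewrite /tens /linext exchange_big; apply: eq_bigr => y _; rewrite scaler_sumr.
by apply: eq_bigr => x _; rewrite scalerA mulrC.
Qed.

Lemma lin_tensl (X Y : choiceType) (v : vec K Y) :
  linmap (fun u : vec K X => tens u v).
Proof. by move=> a u u'; rewrite !tensE lin_linext. Qed.

Lemma lin_tensr (X Y : choiceType) (u : vec K X) :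
  linmap (fun v : vec K Y => tens u v).
Proof. by move=> a v v'; rewrite !tensE' lin_linext. Qed.

Lemma lin_tensl_comp (W X Y : choiceType) (f : vec K W -> vec K X) (v : vec K Y) :
  linmap f -> linmap (fun u => tens (f u) v).
Proof. by move=> H; apply: (lin_comp (lin_tensl v) H). Qed.

Lemma lin_tensr_comp (W X Y : choiceType) (u : vec K X) (f : vec K W -> vec K Y) :
  linmap f -> linmap (fun v => tens u (f v)).
Proof. by move=> H; apply: (lin_comp (lin_tensr u) H). Qed.

Lemma lin_funv (X : choiceType) (e : vec K X -> K) : Defs.linfun e -> linmap (funv e).
Proof. by move=> H a u v; rewrite /funv H scalerDl scalerA. Qed.

Lemma tens_bas (X Y : choiceType) (x : X) (y : Y) :
  tens (bas K x) (bas K y) = bas K (x, y).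
Proof. by rewrite tensE !linext_bas. Qed.

Lemma tmap_bas (X1 Y1 X2 Y2 : choiceType) (f : vec K X1 -> vec K X2)
  (g : vec K Y1 -> vec K Y2) p : tmap f g (bas K p) = tens (f (bas K p.1)) (g (bas K p.2)).
Proof. exact: linext_bas. Qed.

Lemma push_bas (X Z : choiceType) (g : X -> Z) x : push g (bas K x) = bas K (g x).
Proof. exact: linext_bas. Qed.

Ltac lin_hook := fail.
Ltac lin := repeat match goal with
 | |- linmap _ => lin_hook
 | |- linmap (fun x => x) => exact: lin_id
 | |- linmap (@idv _ _) => exact: lin_idv
 | |- linmap (linext _) => exact: lin_linext
 | |- linmap (tmap _ _) => exact: lin_tmap
 | |- linmap (push _) => exact: lin_push
 | |- linmap (@runit _ _) => exact: lin_push
 | |- linmap (@lunit _ _) => exact: lin_push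
 | |- linmap (fun u => tens u _) => exact: lin_tensl
 | |- linmap (tens _) => exact: lin_tensr
 | |- linmap (fun v => tens _ v) => exact: lin_tensr
 | |- linmap (funv _) => apply: lin_funv
 | |- linmap _ => assumption
 | |- Defs.linfun _ => assumption
 | |- linmap (fun u => tens _ _) => first [apply: lin_tensl_comp | apply: lin_tensr_comp]
 | |- linmap (fun x => _) => apply: lin_comp
 end.


Lemma tmap_tens (X1 Y1 X2 Y2 : choiceType) (f : vec K X1 -> vec K X2)
  (g : vec K Y1 -> vec K Y2) u v : linmap f -> linmap g ->
  tmap f g (tens u v) = tens (f u) (g v).
Proof.
move=> Hf Hg; move: u; apply: lin_eq; [lin|lin|move=> x].
move: v; apply: lin_eq; [lin|lin|move=> y].
by rewrite tens_bas tmap_bas.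
Qed.


Lemma tmap_comp (X1 Y1 X2 Y2 X3 Y3 : choiceType) (f : vec K X2 -> vec K X3)
  (g : vec K Y2 -> vec K Y3) (f' : vec K X1 -> vec K X2) (g' : vec K Y1 -> vec K Y2) w :
  linmap f -> linmap g ->
  tmap f g (tmap f' g' w) = tmap (fun x => f (f' x)) (fun y => g (g' y)) w.
Proof.
move=> Hf Hg; move: w; apply: lin_eq; [lin|lin|move=> p].
by rewrite !tmap_bas tmap_tens.
Qed.

Lemma tmap_ext (X1 Y1 X2 Y2 : choiceType) (f f' : vec K X1 -> vec K X2)
  (g g' : vec K Y1 -> vec K Y2) w :
  (forall v, f v = f' v) -> (forall v, g v = g' v) -> tmap f g w = tmap f' g' w.
Proof.
by move=> Ef Eg; rewrite /tmap /linext; apply: eq_bigr => p _; rewrite Ef Eg.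
Qed.

Lemma tmap_id (X Y : choiceType) (w : vec K (X * Y)) : tmap (@idv K X) (@idv K Y) w = w.
Proof.
move: w; apply: lin_eq; [lin|lin|move=> [x y]].
by rewrite tmap_bas tens_bas.
Qed.

Lemma tmap_id' (X Y : choiceType) (w : vec K (X * Y)) : tmap (fun x => x) (fun y => y) w = w.
Proof. exact: tmap_id. Qed.

Lemma tmap_lin_l (W X1 Y1 X2 Y2 : choiceType) (F : vec K W -> vec K X1 -> vec K X2)
  (g : vec K Y1 -> vec K Y2) z :
  (forall a u u' x, F (a *: u + u') x = a *: F u x + F u' x) ->
  linmap (fun u => tmap (F u) g z).
Proof.
move=> HF a u u'; rewrite /tmap /linext scaler_sumr -big_split /=.
apply: eq_bigr => p _.
rewrite HF (linD (lin_tensl _)) (linZ (lin_tensl _)) scalerDr !scalerA mulrC //.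
Qed.

Lemma asr_tens (X Y Z : choiceType) (u : vec K X) (v : vec K Y) (w : vec K Z) :
  push (@asr X Y Z) (tens (tens u v) w) = tens u (tens v w).
Proof.
move: u; apply: lin_eq; [lin|lin|move=> x].
move: v; apply: lin_eq; [lin|lin|move=> y].
move: w; apply: lin_eq; [lin|lin|move=> z].
by rewrite !tens_bas push_bas.
Qed.

Lemma asl_tens (X Y Z : choiceType) (u : vec K X) (v : vec K Y) (w : vec K Z) :
  push (@asl X Y Z) (tens u (tens v w)) = tens (tens u v) w.
Proof.
move: u; apply: lin_eq; [lin|lin|move=> x].
move: v; apply: lin_eq; [lin|lin|move=> y].
move: w; apply: lin_eq; [lin|lin|move=> z].
by rewrite !tens_bas push_bas.
Qed.

Lemma mid4_tens (X Y Z W : choiceType) (a : vec K X) (b : vec K Y) (c : vec K Z) (d : vec K W) :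
  push (@mid4 X Y Z W) (tens (tens a b) (tens c d)) = tens (tens a c) (tens b d).
Proof.
move: a; apply: lin_eq; [lin|lin|move=> x].
move: b; apply: lin_eq; [lin|lin|move=> y].
move: c; apply: lin_eq; [lin|lin|move=> z].
move: d; apply: lin_eq; [lin|lin|move=> t].
by rewrite !tens_bas push_bas.
Qed.

Lemma cust_tens (X Y Z W : choiceType) (a : vec K X) (b : vec K Y) (c : vec K Z) (d : vec K W) :
  push (fun p : X * ((Y * Z) * W) => ((p.1, p.2.1.1), (p.2.1.2, p.2.2)))
    (tens a (tens (tens b c) d)) = tens (tens a b) (tens c d).
Proof.
move: a; apply: lin_eq; [lin|lin|move=> x].
move: b; apply: lin_eq; [lin|lin|move=> y].
move: c; apply: lin_eq; [lin|lin|move=> z].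
move: d; apply: lin_eq; [lin|lin|move=> t].
by rewrite !tens_bas push_bas.
Qed.

Lemma asr_asl (X Y Z : choiceType) (w : vec K (X * (Y * Z))) :
  push (@asr X Y Z) (push (@asl X Y Z) w) = w.
Proof.
move: w; apply: lin_eq; [lin|lin|move=> [x [y z]]].
by rewrite !push_bas.
Qed.

Lemma asl_asr (X Y Z : choiceType) (w : vec K ((X * Y) * Z)) :
  push (@asl X Y Z) (push (@asr X Y Z) w) = w.
Proof.
move: w; apply: lin_eq; [lin|lin|move=> [[x y] z]].
by rewrite !push_bas.
Qed.

Lemma N_asr (X1 Y1 Z1 X2 Y2 Z2 : choiceType) (f : vec K X1 -> vec K X2)
  (g : vec K Y1 -> vec K Y2) (h : vec K Z1 -> vec K Z2) w :
  linmap f -> linmap g -> linmap h ->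
  push (@asr X2 Y2 Z2) (tmap (tmap f g) h w) = tmap f (tmap g h) (push (@asr X1 Y1 Z1) w).
Proof.
move=> Hf Hg Hh; move: w; apply: lin_eq; [lin|lin|move=> [[x y] z]].
by rewrite push_bas !tmap_bas /= ?tmap_bas /= asr_tens.
Qed.

Lemma N_asl (X1 Y1 Z1 X2 Y2 Z2 : choiceType) (f : vec K X1 -> vec K X2)
  (g : vec K Y1 -> vec K Y2) (h : vec K Z1 -> vec K Z2) w :
  linmap f -> linmap g -> linmap h ->
  push (@asl X2 Y2 Z2) (tmap f (tmap g h) w) = tmap (tmap f g) h (push (@asl X1 Y1 Z1) w).
Proof.
move=> Hf Hg Hh; move: w; apply: lin_eq; [lin|lin|move=> [x [y z]]].
by rewrite push_bas !tmap_bas /= ?tmap_bas /= asl_tens.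
Qed.

Lemma P_asr (X Y Z : choiceType) (t : vec K (X * Y)) (v : vec K Z) :
  push (@asr X Y Z) (tens t v) = tmap (@idv K X) (fun c => tens c v) t.
Proof.
move: t; apply: lin_eq; [lin|lin|move=> [x y]].
by rewrite -[bas K (x, y)]tens_bas asr_tens tmap_tens //; lin.
Qed.

Lemma P_asl (X Y Z : choiceType) (u : vec K X) (t : vec K (Y * Z)) :
  push (@asl X Y Z) (tens u t) = tmap (fun c => tens u c) (@idv K Z) t.
Proof.
move: t; apply: lin_eq; [lin|lin|move=> [x y]].
by rewrite -[bas K (x, y)]tens_bas asl_tens tmap_tens //; lin.
Qed.

Lemma P_cust (X Y Z W : choiceType) (v : vec K X) (t : vec K ((Y * Z) * W)) :
  push (fun p : X * ((Y * Z) * W) => ((p.1, p.2.1.1), (p.2.1.2, p.2.2))) (tens v t)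
  = tmap (fun c => tens v c) (@idv K (Z * W)) (push (@asr Y Z W) t).
Proof.
move: t; apply: lin_eq; [lin|lin|move=> [[x y] z]].
by rewrite -[bas K ((x, y), z)]tens_bas -[bas K (x, y)]tens_bas cust_tens asr_tens
  tmap_tens //; lin.
Qed.

Lemma P_mid4 (X Y Z W : choiceType) (x : vec K (X * Y)) (b : vec K Z) (c : vec K W) :
  push (@mid4 X Y Z W) (tens x (tens b c)) = tmap (fun u => tens u b) (fun u => tens u c) x.
Proof.
move: x; apply: lin_eq; [lin|lin|move=> [x y]].
by rewrite -[bas K (x, y)]tens_bas mid4_tens tmap_tens //; lin.
Qed.

Lemma runit_tens (X : choiceType) (v : vec K X) (s : vec K unit) :
  runit (tens v s) = s@_tt *: v.
Proof.
move: v; apply: lin_eq; [lin| |move=> x].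
  by move=> a u u' /=; rewrite scalerDr !scalerA mulrC.
move: s; apply: lin_eq; [lin| |move=> []].
  by move=> a u u' /=; rewrite mcoeffD mcoeffZ scalerDl scalerA.
by rewrite tens_bas /runit push_bas /bas mcoeffUU scale1r.
Qed.

Lemma runit_tmap (X1 Y1 X2 : choiceType) (f : vec K X1 -> vec K X2)
  (g : vec K Y1 -> vec K unit) x : linmap f -> linmap g ->
  runit (tmap f g x) = f (runit (tmap (@idv K X1) g x)).
Proof.
move=> Hf Hg; move: x; apply: lin_eq; [lin|lin|move=> p].
by rewrite !tmap_bas !runit_tens (linZ Hf).
Qed.


Lemma lin_eq_t (X Y Z : choiceType) (h1 h2 : vec K (X * Y) -> vec K Z) :
  linmap h1 -> linmap h2 -> (forall u v, h1 (tens u v) = h2 (tens u v)) ->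
  forall w, h1 w = h2 w.
Proof.
move=> H1 H2 E; apply: lin_eq => // -[x y]; by rewrite -tens_bas E.
Qed.

End Infra.


Ltac lin_hook := fail.
Ltac lin := repeat match goal with
 | |- linmap _ => lin_hook
 | |- linmap (fun x => x) => exact: lin_id
 | |- linmap (@idv _ _) => exact: lin_idv
 | |- linmap (linext _) => exact: lin_linext
 | |- linmap (tmap _ _) => exact: lin_tmap
 | |- linmap (push _) => exact: lin_push
 | |- linmap (@runit _ _) => exact: lin_push
 | |- linmap (@lunit _ _) => exact: lin_push
 | |- linmap (fun u => tens u _) => exact: lin_tensl
 | |- linmap (tens _) => exact: lin_tensr
 | |- linmap (fun v => tens _ v) => exact: lin_tensr
 | |- linmap (funv _) => apply: lin_funv
 | |- linmap _ => assumption
 | |- Defs.linfun _ => assumption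
 | |- linmap (fun u => tens _ _) => first [apply: lin_tensl_comp | apply: lin_tensr_comp]
 | |- linmap (fun x => _) => apply: lin_comp
 end.



Section M.
Variable K : fieldType.
Section Main.
Variables (I J : choiceType) (A : hopf_data K I) (Y : hopf_data K J).
Variable rho : vec K J -> vec K (I * J).
Local Notation mA := (hmul A). Local Notation DA := (hcomul A).
Local Notation eA := (hcounit A). Local Notation mY := (hmul Y).
Local Notation DY := (hcomul Y). Local Notation eY := (hcounit Y).
Local Notation oA := (hone A). Local Notation oY := (hone Y).
Local Notation T := (Tmap A Y rho).
Variables (hmA : linmap mA) (hDA : linmap DA) (heA : Defs.linfun eA)
  (hmY : linmap mY) (hDY : linmap DY) (heY : Defs.linfun eY) (hrho : linmap rho).
Variable assocA : forall a b c, mA (tens (mA (tens a b)) c) = mA (tens a (mA (tens b c))).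
Variable unitAr : forall v, mA (tens v oA) = v.
Variable unitYr : forall v, mY (tens v oY) = v.
Variable DAmul : forall b a, DA (mA (tens b a)) = tmul mA mA (tens (DA b) (DA a)).
Variable DA1 : DA oA = tens oA oA.

Definition ra (a : vec K I) := fun b => mA (tens b a).
Definition la (e : vec K I) := fun c => mA (tens e c).

Lemma lin_ra a : linmap (ra a).
Proof. rewrite /ra; lin. Qed.
Lemma lin_la a : linmap (la a).
Proof. rewrite /la; lin. Qed.
Lemma lin_T : linmap T.
Proof. exact: lin_linext. Qed.
Lemma lin_tmul (X1 Y1 : choiceType) (m1 : vec K (X1 * X1) -> vec K X1) (m2 : vec K (Y1 * Y1) -> vec K Y1) :
  linmap (tmul m1 m2).
Proof. rewrite /tmul; lin. Qed.

Ltac lin_hook ::= match goal with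
 | |- linmap (ra _) => exact: lin_ra
 | |- linmap (la _) => exact: lin_la
 | |- linmap (Tmap _ _ _) => exact: lin_T
 | |- linmap (tmul _ _) => exact: lin_tmul
 end.

Lemma ra_lin_a k a a' x : ra (k *: a + a') x = k *: ra a x + ra a' x.
Proof. by rewrite /ra (lin_tensr x) hmA. Qed.

Lemma ra1 x : ra oA x = x.
Proof. exact: unitAr. Qed.

Lemma ra_assoc a b x : ra (ra a b) x = ra a (ra b x).
Proof. by rewrite /ra assocA. Qed.

Lemma la_ra e a x : la e (ra a x) = ra a (la e x).
Proof. by rewrite /ra /la assocA. Qed.

Lemma mulR z a : tmul mA mY (tens z (tens a oY)) = tmap (ra a) (@idv K J) z.
Proof.
move: z; apply: lin_eq; [lin|lin|move=> [x y]].
rewrite -[bas K (x, y)]tens_bas /tmul mid4_tens !tmap_tens //; [idtac | lin ..].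
by rewrite unitYr.
Qed.

Lemma TmapE u a : T (tens u a) = tmap (ra a) (@idv K J) (rho u).
Proof.
move: u; apply: lin_eq; [lin|lin|move=> x].
rewrite -mulR; move: a; apply: lin_eq; [lin|lin|move=> i].
by rewrite tens_bas /Tmap linext_bas.
Qed.



Definition QR u := push (@asr I J J) (tmap T (@idv K J) (push (@asl J I J) (tmap (@idv K J) rho (DY u)))).

Ltac tc := rewrite {1}tmap_comp; [idtac | lin ..].
Ltac tcL := rewrite [in LHS]tmap_comp; [idtac | lin ..].
Ltac tcR := rewrite [in RHS]tmap_comp; [idtac | lin ..].

Lemma RHS3 u a : push (@asr I J J) (tmap T (@idv K J) (push (@asl J I J)
  (tmap (@idv K J) T (push (@asr J J I) (tmap DY (@idv K I) (tens u a))))))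
  = tmap (ra a) (@idv K (J * J)) (QR u).
Proof.
(rewrite tmap_tens; [idtac | lin ..]).
(rewrite /QR; move: (DY u) => t; move: t; apply: lin_eq_t; [lin|lin|move=> b b']).
(rewrite asr_tens).
(rewrite {1}tmap_tens; [idtac | lin ..]).
(rewrite {1}tmap_tens; [idtac | lin ..]).
(rewrite TmapE !P_asl).
(tc; tc; tc).
(move: (rho b') => x; move: x; apply: lin_eq_t; [lin|lin|move=> c d]).
(rewrite {1}tmap_tens; [idtac | lin ..]).
(rewrite {1}tmap_tens; [idtac | lin ..]).
(rewrite {1}P_asr).
(rewrite {1}P_asr).
(rewrite {1}TmapE).
(rewrite {1}TmapE).
tc. tc. tcR.
by apply: tmap_ext => v; rewrite /idv ?ra_assoc.
Qed.


Lemma LHS3 u a : tmap (@idv K I) DY (T (tens u a))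
  = tmap (ra a) (@idv K (J * J)) (tmap (@idv K I) DY (rho u)).
Proof.
rewrite TmapE. tcL. tcR.
by apply: tmap_ext.
Qed.

Lemma idvE (X : choiceType) (v : vec K X) : idv v = v.
Proof. by []. Qed.

Lemma H2 s : push (@asr I J J) (tmap T (@idv K J) (push (@asl J I J) s))
  = tmap mA (@idv K (J * J)) (push (@mid4 I J I J) (tmap rho (@idv K (I * J)) s)).
Proof.
move: s; apply: lin_eq_t; [lin|lin|move=> b t].
move: t; apply: lin_eq_t; [lin|lin|move=> c d].
rewrite asl_tens.
rewrite {1}tmap_tens; [idtac | lin ..].
rewrite {1}tmap_tens; [idtac | lin ..].
rewrite TmapE P_asr [idv (tens c d)]idvE P_mid4.
tcL. tcR.
by apply: tmap_ext.
Qed.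

Lemma QR_eq y : QR y = tmap mA (@idv K (J * J)) (push (@mid4 I J I J) (tmap rho rho (DY y))).
Proof.
rewrite /QR H2. tcL.
by congr (tmap _ _ (push _ _)); apply: tmap_ext.
Qed.

Lemma tmap_ra1 (X : choiceType) (x : vec K (I * X)) : tmap (ra oA) (@idv K X) x = x.
Proof.
rewrite -[RHS]tmap_id.
by apply: tmap_ext => v //; rewrite ra1.
Qed.


Lemma iii_equiv :
  (forall y, tmap (@idv K I) DY (rho y)
         = tmap mA (@idv K (J * J))
             (push (@mid4 I J I J) (tmap rho rho (DY y)))) <->
  (forall w : vec K (J * I),
         tmap (@idv K I) DY (T w)
         = push (@asr I J J)
             (tmap T (@idv K J)
               (push (@asl J I J)
                 (tmap (@idv K J) T
                   (push (@asr J J I) (tmap DY (@idv K I) w)))))).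
Proof.
split=> H.
  apply: lin_eq_t; [lin|lin|move=> u a].
  by rewrite LHS3 RHS3 QR_eq H.
move=> y; have := H (tens y oA).
by rewrite LHS3 RHS3 !tmap_ra1 QR_eq.
Qed.


Definition R2 (s : vec K (I * I)) := fun w => tmul mA mA (tens w s).
Definition M (s : vec K (I * I)) := fun z =>
  push (@asr I I J) (tmap (R2 s) (@idv K J) (push (@asl I I J) z)).
Definition Ee (z : vec K J) := runit (tmap (@idv K I) (funv eY) (rho z)).

Lemma lin_R2 s : linmap (R2 s).
Proof. rewrite /R2; lin. Qed.
Lemma lin_M s : linmap (M s).
Proof. rewrite /M; lin. Qed.
Lemma lin_Teps : linmap (Teps A Y rho).
Proof. rewrite /Teps; lin. Qed.

Ltac lin_hook ::= match goal with
 | |- linmap (ra _) => exact: lin_ra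
 | |- linmap (la _) => exact: lin_la
 | |- linmap (Tmap _ _ _) => exact: lin_T
 | |- linmap (tmul _ _) => exact: lin_tmul
 | |- linmap (R2 _) => exact: lin_R2
 | |- linmap (M _) => exact: lin_M
 | |- linmap (Teps _ _ _) => exact: lin_Teps
 end.

Lemma R2_lin_s k s s' w : R2 (k *: s + s') w = k *: R2 s w + R2 s' w.
Proof.
have L : linmap (fun x => tmul mA mA (tens w x)) by lin.
exact: (L k s s').
Qed.

Lemma M_lin_s z : linmap (fun s => M s z).
Proof.
rewrite /M; apply: lin_comp; first by lin.
by apply: tmap_lin_l => k u u' x; rewrite R2_lin_s.
Qed.

Lemma R2_tens a b w : R2 (tens a b) w = tmap (ra a) (ra b) w.
Proof.
move: w; apply: lin_eq_t; [lin|lin|move=> c d].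
rewrite /R2 /tmul mid4_tens.
rewrite {1}tmap_tens; [idtac | lin ..].
by rewrite {1}tmap_tens; [idtac | lin ..].
Qed.

Lemma M_tens a b z : M (tens a b) z = tmap (ra a) (tmap (ra b) (@idv K J)) z.
Proof.
rewrite /M.
have -> : forall X, tmap (R2 (tens a b)) (@idv K J) X = tmap (tmap (ra a) (ra b)) (@idv K J) X.
  by move=> X; apply: tmap_ext => // v; exact: R2_tens.
by rewrite N_asr ?asr_asl //; lin.
Qed.

Lemma M1 z : M (DA oA) z = z.
Proof.
rewrite DA1 M_tens -[RHS]tmap_id.
by apply: tmap_ext => v; [exact: ra1 | exact: tmap_ra1].
Qed.

Lemma LHS4 u a :
  tmap (@idv K I) T
    (push (@asr I J I)
      (tmap T (@idv K I)
        (push (@asl J I I) (tmap (@idv K J) DA (tens u a)))))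
  = M (DA a) (tmap (@idv K I) rho (rho u)).
Proof.
rewrite {1}tmap_tens; [idtac | lin ..].
move: (DA a) => s; move: s; apply: lin_eq_t; [lin| exact: M_lin_s |move=> c d].
rewrite asl_tens.
rewrite {1}tmap_tens; [idtac | lin ..].
rewrite {1}TmapE P_asr.
tcL. tcL.
rewrite M_tens. tcR.
by apply: tmap_ext => v //; rewrite TmapE.
Qed.


Lemma TepsE b x : Teps A Y rho (tens b x) = la (Ee b) x.
Proof.
rewrite /Teps TmapE. tcL.
rewrite runit_tmap; [idtac | lin ..].
by rewrite /la /Ee /idv /ra; congr (mA (tens (runit _) x)); apply: tmap_ext.
Qed.

Lemma LR e s w : tmap (la e) (@idv K I) (R2 s w) = R2 s (tmap (la e) (@idv K I) w).
Proof.
move: s; apply: lin_eq_t.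
- by apply: lin_comp; [lin | exact: (fun k u u' => R2_lin_s k u u' w)].
- exact: (fun k u u' => R2_lin_s k u u' _).
move=> c d.
rewrite {1}R2_tens {1}R2_tens.
tcL. tcR.
by apply: tmap_ext => v //; rewrite la_ra.
Qed.

Lemma P_asl2 (X1 X2 Y1 Y2 Z : choiceType) (f : vec K X1 -> vec K X2)
  (g : vec K Y1 -> vec K Y2) (z : vec K Z) w : linmap f -> linmap g ->
  push (@asl X2 Y2 Z) (tmap f (fun y => tens (g y) z) w) = tens (tmap f g w) z.
Proof.
move=> Hf Hg; move: w; apply: lin_eq_t; [lin|lin|move=> c d].
rewrite {1}tmap_tens; [idtac | lin ..].
rewrite asl_tens.
by rewrite {1}tmap_tens; [idtac | lin ..].
Qed.

Lemma KEY e s X :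
  tmap (la e) (@idv K (I * J)) (push (@asr I I J) (tmap (R2 s) (@idv K J) X))
  = M s (tmap (la e) (@idv K (I * J)) (push (@asr I I J) X)).
Proof.
move: X; apply: lin_eq_t; [lin|lin|move=> w z].
rewrite {1}tmap_tens; [idtac | lin ..].
rewrite {1}P_asr. tcL.
rewrite {1}P_asr. tcR.
rewrite /M.
rewrite {1}(_ : tmap (fun x => la e (idv x)) (fun y => idv (tens y z)) w
   = tmap (la e) (fun y => tens (idv y) z) w); last by apply: tmap_ext.
rewrite P_asl2; [idtac | lin ..].
rewrite {1}tmap_tens; [idtac | lin ..].
rewrite {1}P_asr -LR. tcR.
by apply: tmap_ext.
Qed.

Lemma DAra a x : tmap DA (@idv K J) (tmap (ra a) (@idv K J) x)
  = tmap (R2 (DA a)) (@idv K J) (tmap DA (@idv K J) x).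
Proof.
tcL. tcR.
by apply: tmap_ext => v //; rewrite /R2 /ra /idv DAmul.
Qed.


Definition ZR y := tmap mA (@idv K (I * J))
             (push (fun p : I * ((I * I) * J) =>
                      ((p.1, p.2.1.1), (p.2.1.2, p.2.2)))
               (tmap (fun z => runit (tmap (@idv K I) (funv eY) (rho z)))
                     (fun z => tmap DA (@idv K J) (rho z)) (DY y))).

Lemma RHS4 u a :
  tmap (Teps A Y rho) (@idv K (I * J))
    (push (fun p : J * ((I * I) * J) => ((p.1, p.2.1.1), (p.2.1.2, p.2.2)))
      (tmap (@idv K J) (fun v => tmap DA (@idv K J) (T v))
        (push (@asr J J I) (tmap DY (@idv K I) (tens u a)))))
  = M (DA a) (ZR u).
Proof.
rewrite {1}tmap_tens; [idtac | lin ..].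
rewrite {1}P_asr. tcL.
rewrite /ZR; move: (DY u) => t; move: t; apply: lin_eq_t; [lin|lin|move=> b b'].
rewrite /=.
rewrite {1}tmap_tens; [idtac | lin ..].
rewrite {1}P_cust TmapE DAra. tcL.
rewrite [in LHS](@tmap_ext K _ _ _ _ _ (la (Ee b)) _ (@idv K (I * J))); first last.
- by [].
- by move=> v; rewrite TepsE.
rewrite KEY.
rewrite {1}tmap_tens; [idtac | lin ..].
rewrite /= {1}P_cust. tcR.
by congr (M _ _); apply: tmap_ext.
Qed.

Lemma iv_equiv :
  (forall y, tmap (@idv K I) rho (rho y) = ZR y) <->
  (forall w : vec K (J * I),
         tmap (@idv K I) T
           (push (@asr I J I)
             (tmap T (@idv K I)
               (push (@asl J I I) (tmap (@idv K J) DA w))))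
         = tmap (Teps A Y rho) (@idv K (I * J))
             (push (fun p : J * ((I * I) * J) =>
                      ((p.1, p.2.1.1), (p.2.1.2, p.2.2)))
               (tmap (@idv K J) (fun v => tmap DA (@idv K J) (T v))
                 (push (@asr J J I) (tmap DY (@idv K I) w))))).
Proof.
split=> H.
  apply: lin_eq_t; [lin|lin|move=> u a].
  by rewrite LHS4 RHS4 H.
move=> y; have := H (tens y oA).
by rewrite LHS4 RHS4 !M1.
Qed.

End Main.
End M.

Theorem proposition3p8 (K : fieldType) (I J : choiceType)
  (A : hopf_data K I) (Y : hopf_data K J)
  (hA : is_hopf A) (hY : is_hopf Y)
  (rho : vec K J -> vec K (I * J)) (hrho : linmap rho) :
  partial_comod_coalg_hopf A Y rho <-> partial_comod_coalg_mult A Y rho.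
Proof.
case: hA => [[hmA hDA heA hSA] [assocA unitA coassA counitA [DAmul DA1 eAm eA1 antA]]].
case: hY => [[hmY hDY heY hSY] [assocY unitY coassY counitY [DYmul DY1 eYm eY1 antY]]].
have assocA' : forall a b c : vec K I,
    hmul A (tens (hmul A (tens a b)) c) = hmul A (tens a (hmul A (tens b c))).
  move=> a b c; have := assocA (tens (tens a b) c).
  rewrite {1}tmap_tens; [idtac | lin ..].
  rewrite asr_tens.
  by rewrite {1}tmap_tens; [idtac | lin ..].
have unitAr : forall v : vec K I, hmul A (tens v (hone A)) = v.
  by move=> v; case: (unitA v).
have unitYr : forall v : vec K J, hmul Y (tens v (hone Y)) = v.
  by move=> v; case: (unitY v).
have DAmul' : forall b a : vec K I,
    hcomul A (hmul A (tens b a)) =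
    tmul (hmul A) (hmul A) (tens (hcomul A b) (hcomul A a)).
  move=> b a; have := DAmul (tens b a).
  by rewrite {1}tmap_tens; [idtac | lin ..].
have [E3a E3b] := iii_equiv hmA hmY hDY hrho assocA' unitAr unitYr.
have [E4a E4b] := iv_equiv hmA hDA hmY hDY heY hrho assocA' unitAr unitYr DAmul' DA1.
rewrite /partial_comod_coalg_hopf /partial_comod_coalg_mult.
split.
  case=> h1 h2 h3; split => //.
  - by move=> y y' a /=; split; eexists.
  - exact: E3a.
  - exact: E4a.
case=> h1 h2 h3 h4; split => //.
- exact: E3b.
- exact: E4b.
Qed.
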